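(* Let $n>1$ be an odd integer, $k\ge1$, and $p$ the smallest prime divisor of $n$. Then for every $\mathbf{m}\in\mathbb{Z}_n^k\setminus\{\mathbf{0}\}$ and every $\mathbf{c}\|t\in\mathbb{Z}_n^k\times\mathbb{Z}_n$, $$\Pr_{\mathbf{m}',\mathbf{x}\leftarrow\mathbb{Z}_n^k,\ \mathbf{y}\leftarrow(\mathbb{Z}_n^* )^k}\big[\mathbf{m}'=\mathbf{m}\ \big|\ \mathcal{E}_{\mathbf{x}\|\mathbf{y}}(\mathbf{m}')=\mathbf{c}\|t\big]\le\frac{1}{(p-1)n^{k-1}},$$ i.e., $\mathrm{C}^{n,k}_{\mathrm{RDH}}$ provides $\frac{1}{(p-1)n^{k-1}}$-secrecy on $\mathbb{Z}_n^k\setminus\{\mathbf{0}\}$.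
   Context: For $\mathbf{y}\in(\mathbb{Z}_n^* )^k$ and $\mathbf{m}\in\mathbb{Z}_n^k$ let $\Upsilon_{\mathbf{y}}(\mathbf{m})=\sum_{i=1}^k m_iy_i\bmod n$. The code $\mathrm{C}^{n,k}_{\mathrm{RDH}}$ has keys $\mathbf{x}\|\mathbf{y}\in\mathbb{Z}_n^k\times(\mathbb{Z}_n^* )^k$ and encryption $\mathcal{E}_{\mathbf{x}\|\mathbf{y}}(\mathbf{m})=(\mathbf{m}+\mathbf{x}\bmod n)\,\|\,\Upsilon_{\mathbf{y}}(\mathbf{m})$ for $\mathbf{m}\in\mathbb{Z}_n^k$. All random choices are uniform and independent; the conditioning event is assumed to have positive probability. *)

(* Defs.v *)
From HB Require Import structures.
From mathcomp Require Import all_boot all_order all_algebra.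
Set Implicit Arguments. Unset Strict Implicit. Unset Printing Implicit Defensive.
Import Order.TTheory GRing.Theory Num.Theory.
Local Open Scope ring_scope.

(* Vectors in Z_n^k (use only with 1 < n). *)
Definition vec (n k : nat) := {ffun 'I_k -> 'Z_n}.

Definition Ups (n k : nat) (y m : vec n k) : 'Z_n := \sum_(i < k) m i * y i.

Definition Enc (n k : nat) (x y m : vec n k) : vec n k * 'Z_n :=
  ([ffun i => m i + x i], Ups y m).

Definition unit_vec (n k : nat) (y : vec n k) : bool :=
  [forall i, (y i \in GRing.unit)].

(* Sample space of triples ((m', x), y): m', x range over Z_n^k, y over unit vectors; uniform *)
Definition sample_space (n k : nat) : {set vec n k * vec n k * vec n k} :=
  [set w | unit_vec w.2].

Definition enc_event (n k : nat) (c : vec n k) (t : 'Z_n)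
  : {set vec n k * vec n k * vec n k} :=
  [set w in sample_space n k | Enc w.1.2 w.2 w.1.1 == (c, t)].

Definition joint_event (n k : nat) (m c : vec n k) (t : 'Z_n)
  : {set vec n k * vec n k * vec n k} :=
  [set w in enc_event c t | w.1.1 == m].

Definition cond_prob (n k : nat) (m c : vec n k) (t : 'Z_n) : rat :=
  (#|joint_event m c t|%:R) / (#|enc_event c t|%:R).

(* Main.v *)
Require Import Defs.
From HB Require Import structures.
From mathcomp Require Import all_boot all_order all_algebra.
Import Order.TTheory GRing.Theory Num.Theory.
Set Implicit Arguments. Unset Strict Implicit.
Local Open Scope ring_scope.

Lemma card_Zn n : (1 < n)%N -> #|{: 'Z_n}| = n.
Proof. by move=> h; rewrite card_ord Zp_cast. Qed.

Lemma Ups_add n k (y a b : vec n k) : Ups y (a + b) = Ups y a + Ups y b.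
Proof. by rewrite /Ups -big_split; apply: eq_bigr => i _; rewrite ffunE mulrDl. Qed.

Definition Fs n k (y : vec n k) (s : 'Z_n) := [set m' : vec n k | Ups y m' == s].

Lemma Fs_le n k (i0 : 'I_k) (y : vec n k) (hy : y i0 \is a GRing.unit) s s' :
  (#|Fs y s| <= #|Fs y s'|)%N.
Proof.
pose d : vec n k := [ffun i => if i == i0 then (s' - s) / y i0 else 0].
have hd : Ups y d = s' - s.
  rewrite /Ups (bigD1 i0) //= big1 ?addr0; first by rewrite ffunE eqxx divrK.
  by move=> i /negbTE hi; rewrite ffunE hi mul0r.
rewrite -(card_in_imset (f := fun m' : vec n k => m' + d)); last by move=> a b _ _; apply: addIr.
apply: subset_leq_card; apply/subsetP => z /imsetP [a]; rewrite !inE => /eqP ha ->.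
by rewrite Ups_add ha hd addrC subrK.
Qed.

Lemma Fs_card n k (Hn : (1 < n)%N) (i0 : 'I_k) (y : vec n k) (hy : y i0 \is a GRing.unit) t :
  #|Fs y t| = (n ^ k.-1)%N.
Proof.
have eqF s : #|Fs y s| = #|Fs y t|.
  by apply/eqP; rewrite eqn_leq !(Fs_le hy).
have hall : #|{: vec n k}| = (n ^ k)%N by rewrite card_ffun card_Zn // card_ord.
have : (\sum_(s : 'Z_n) #|Fs y s| = n ^ k)%N.
  rewrite -hall -sum1_card (partition_big (fun m' : vec n k => Ups y m') predT) //=.
  apply: eq_bigr => s _; rewrite -sum1_card; apply: eq_bigl => m'; by rewrite inE.
under eq_bigr do rewrite eqF.
rewrite sum_nat_const card_Zn //.
have hk : (0 < k)%N by apply: leq_ltn_trans (ltn_ord i0).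
have -> : (n ^ k = n * n ^ k.-1)%N by rewrite -expnS prednK.
move=> /eqP; rewrite eqn_pmul2l; last by apply: ltnW.
by move/eqP.
Qed.

Lemma coprime_small n a : (0 < a)%N -> (a < pdiv n)%N -> coprime n a.
Proof.
move=> a0 ap; rewrite /coprime; have g0 : (0 < gcdn n a)%N by rewrite gcdn_gt0 a0 orbT.
case: (ltngtP (gcdn n a) 1) => [|g1|] //; first by rewrite ltnS leqn0 => /eqP h; rewrite h in g0.
have := pdiv_min_dvd g1 (dvdn_gcdl n a).
have := dvdn_leq a0 (dvdn_gcdr n a).
move=> h1 h2; have := leq_trans h2 h1; by rewrite leqNgt ap.
Qed.

Lemma small_unit n a : (1 < n)%N -> (0 < a)%N -> (a < pdiv n)%N -> (a%:R : 'Z_n) \is a GRing.unit.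
Proof. by move=> hn a0 ap; rewrite unitZpE // coprime_small. Qed.

Lemma diff_unit n a b : (1 < n)%N -> (a < (pdiv n).-1)%N -> (b < (pdiv n).-1)%N -> a != b ->
  ((a.+1)%:R - (b.+1)%:R : 'Z_n) \is a GRing.unit.
Proof.
move=> hn ha hb.
have hp : (a.+1 < pdiv n)%N /\ (b.+1 < pdiv n)%N.
  by have := pdiv_gt0 n; case: (pdiv n) ha hb => //.
wlog lt : a b ha hb hp / (b < a)%N.
  move=> H hab; case: (ltngtP a b) => [ab|ba|e]; last by rewrite e eqxx in hab.
  - by rewrite -opprB unitrN; apply: H => //; [case: hp | rewrite eq_sym].
  - by apply: H.
move=> _; rewrite -natrB; last by rewrite ltnS ltnW.
apply: small_unit => //; first by rewrite subn_gt0.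
by apply: leq_ltn_trans (leq_subr _ _) _; case: hp.
Qed.

From mathcomp Require Import ring.

Definition Aset n k (m : vec n k) t := [set y : vec n k | unit_vec y && (Ups y m == t)].
Definition Uset n k := [set y : vec n k | unit_vec y].

Lemma inj_bound n k (Hn : (1 < n)%N) (m : vec n k) (j : 'I_k) (hj : m j != 0) t :
  (#|Aset m t| * (pdiv n).-1 <= #|Uset n k|)%N.
Proof.
pose f (yb : vec n k * 'I_(pdiv n).-1) : vec n k :=
  [ffun i => if i == j then (yb.2.+1)%:R * yb.1 i else yb.1 i].
have uA (a : 'I_(pdiv n).-1) : (((a : nat).+1)%:R : 'Z_n) \is a GRing.unit.
  apply: small_unit => //; have := ltn_ord a.
  by rewrite -ltnS prednK ?pdiv_gt0.
rewrite -{1}[(pdiv n).-1]card_ord -cardsT -cardsX.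
rewrite -(card_in_imset (f := f)).
  apply: subset_leq_card; apply/subsetP => z /imsetP [[y a]].
  rewrite !inE /= andbT => /andP [uy _] ->; rewrite /unit_vec.
  apply/forallP => i; rewrite ffunE; move/forallP: uy => uy.
  by case: ifP => _; rewrite ?unitrM ?uA uy.
move=> [y a] [z b]; rewrite !inE /= !andbT => /andP [uy /eqP hy].
move=> /andP [uz /eqP hz] heq.
have hi i : i != j -> y i = z i.
  by move=> hij; have := congr1 (fun g : vec n k => g i) heq; rewrite /f !ffunE (negbTE hij).
have hjeq := congr1 (fun g : vec n k => g j) heq; rewrite /f !ffunE eqxx /= in hjeq.
have hmy : m j * y j = m j * z j.
  move: hz; rewrite -hy /Ups (bigD1 j) //= [in RHS](bigD1 j) //=.
  rewrite [in RHS](eq_bigr (fun i => m i * z i)); last by move=> i hij; rewrite (hi i hij).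
  by move/addIr.
have uyj : y j \is a GRing.unit by move/forallP: uy.
case: (eqVneq a b) => [eab|nab].
  subst b; have yjz : y j = z j by apply: (mulrI (uA a)).
  congr pair; apply/ffunP => i; case: (eqVneq i j) => [->//|hij]; by rewrite (hi i hij).
exfalso; move: hj; apply/negP; rewrite negbK.
have hd := diff_unit Hn (ltn_ord a) (ltn_ord b) nab.
have h0 : ((a : nat).+1%:R - (b : nat).+1%:R) * (m j * y j) = 0.
  have e1 : (b : nat).+1%:R * (m j * y j) = m j * ((b : nat).+1%:R * z j) by rewrite hmy; ring.
  rewrite mulrBl e1 -hjeq; apply/eqP; rewrite subr_eq0; apply/eqP; ring.
have : m j * y j = 0 by apply: (mulrI hd); rewrite h0 mulr0.
by move/eqP; rewrite -(mul0r (y j)) (inj_eq (mulIr uyj)).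
Qed.

Definition Bset n k (t : 'Z_n) := [set p : vec n k * vec n k | unit_vec p.1 && (Ups p.1 p.2 == t)].

Lemma Bset_card n k (Hn : (1 < n)%N) (Hk : (0 < k)%N) t :
  #|@Bset n k t| = (#|Uset n k| * n ^ k.-1)%N.
Proof.
rewrite -sum1_card.
rewrite (eq_bigl (fun p : vec n k * vec n k => unit_vec p.1 && (Ups p.1 p.2 == t))); last first.
  by move=> p; rewrite inE.
rewrite -(pair_big_dep (fun y => unit_vec y) (fun y m' => Ups y m' == t) (fun _ _ => 1%N)) /=.
rewrite -sum1_card big_distrl /=.
rewrite [in RHS](eq_bigl (fun y => unit_vec y)); last by move=> y; rewrite inE.
apply: eq_bigr => y uy; have uy0 : y (Ordinal Hk) \is a GRing.unit by move/forallP: uy.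
  rewrite mul1n -(Fs_card Hn uy0 t).
by rewrite -sum1_card; apply: eq_bigl => m'; rewrite inE.
Qed.

Lemma joint_le n k (m c : vec n k) t : (#|joint_event m c t| <= #|Aset m t|)%N.
Proof.
rewrite -(card_in_imset (f := fun w : vec n k * vec n k * vec n k => w.2)).
  apply: subset_leq_card; apply/subsetP => y /imsetP [[[m' x] y']].
  rewrite !inE /= => /andP [/andP [uy /eqP he] /eqP em] ->; subst m'.
  case: he => _ ->; by rewrite uy eqxx.
move=> [[m1 x1] y1] [[m2 x2] y2]; rewrite !inE /= => /andP [/andP [_ /eqP h1] /eqP e1].
move=> /andP [/andP [_ /eqP h2] /eqP e2] /= ey; subst.
case: h1 => hc1 _; case: h2 => hc2 _.
congr (_, _, _); apply/ffunP => i.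
have := congr1 (fun g : vec n k => g i) hc1; have := congr1 (fun g : vec n k => g i) hc2.
by rewrite !ffunE => h2 h1; apply: (addrI (m i)); rewrite h1 h2.
Qed.

Lemma enc_ge n k (c : vec n k) t : (#|@Bset n k t| <= #|enc_event c t|)%N.
Proof.
rewrite -(card_in_imset (f := fun p : vec n k * vec n k => (p.2, [ffun i => c i - p.2 i], p.1))).
  apply: subset_leq_card; apply/subsetP => w /imsetP [[y m']].
  rewrite !inE /= => /andP [uy /eqP hu] ->; rewrite /= uy /Enc hu.
  apply/eqP; congr (_, _); apply/ffunP => i; rewrite !ffunE; by rewrite addrC subrK.
by move=> [y1 m1] [y2 m2] _ _ [-> _ ->].
Qed.

Theorem mainTheorem6 (n k : nat) (Hn1 : (1 < n)%N) (Hodd : odd n) (Hk : (0 < k)%N)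
  (m : vec n k) (Hm : m != [ffun => 0]) (c : vec n k) (t : 'Z_n)
  (Hpos : (0 < #|enc_event c t|)%N) :
  cond_prob m c t <= 1 / (((pdiv n)%:R - 1) * (n%:R) ^+ (k.-1)).
Proof.
have [j hj] : exists j, m j != 0.
  case: (pickP (fun j => m j != 0)) => [j hj|h]; first by exists j.
  have em : m = [ffun => 0].
    by apply/ffunP => i; rewrite ffunE; apply/eqP; move: (h i) => /= /negbFE.
  by rewrite em eqxx in Hm.
have hp1 : (0 < (pdiv n).-1)%N.
  by have := prime_gt1 (pdiv_prime Hn1); case: (pdiv n) => // [[]].
have key : (#|joint_event m c t| * ((pdiv n).-1 * n ^ k.-1) <= #|enc_event c t|)%N.
  apply: leq_trans (enc_ge c t); rewrite Bset_card // mulnA.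
  rewrite leq_mul2r; apply/orP; right; apply: leq_trans (inj_bound Hn1 hj t).
  by rewrite leq_mul2r joint_le orbT.
rewrite /cond_prob.
have -> : ((pdiv n)%:R - 1 : rat) = ((pdiv n).-1)%:R.
  by rewrite -{1}(prednK (pdiv_gt0 n)) -natr1 addrK.
rewrite -natrX -natrM.
have D0 : (0 < ((pdiv n).-1 * n ^ k.-1)%N)%N by rewrite muln_gt0 hp1 expn_gt0 ltnW.
rewrite ler_pdivrMr ?ltr0n // mulrC mul1r ler_pdivlMr ?ltr0n // -natrM ler_nat.
exact: key.
Qed.
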